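(* Let $T$ be a quasi-binary tree with vertex weight function $\omega:V(T)\to\mathbb{R}$. Let $k\ge 2$ be an integer and let $\gamma\in\mathbb{R}$ with $\gamma\ge \omega_3$. If $$\omega(T)\ge \max\left\{\frac{2k-1}{2}\,\omega_1-\frac{1}{2}\,\gamma,\ (2k-1)\,\omega_2-k\gamma\right\},$$ then $$\beta_k(T)\ge \frac{\omega(T)-(k-1)\gamma}{2k-1}.$$
   Context: A binary tree is a tree in which every vertex has degree $3$, except for pending vertices (degree $1$) and one root vertex (degree $2$). A tree is quasi-binary if it is a connected subgraph of a binary tree; in particular every vertex has degree $1$, $2$ or $3$. Given a weight function $\omega:V(T)\to\mathbb{R}$, for a subgraph $H$ write $\omega(H)=\sum_{v\in V(H)}\omega(v)$. For $i=1,2,3$ let $V_i$ be the set of vertices of degree $i$, and let $\omega_i=\max\{\omega(v): v\in V_j \text{ for some } j \text{ with } i\le j\le 3\}$ (the maximum weight of a vertex of degree at least $i$). For an integer $1\le k\le |V(T)|-1$, a $k$-separator of $T$ is a set $F\subseteq E(T)$ with $|F|=k-1$; its deletion yields $k$ connected components $C^1_F(T),\dots,C^k_F(T)$. Define $$\beta_k(T)=\max_{F\subseteq E(T),\,|F|=k-1}\ \min_{1\le i\le k}\omega(C^i_F(T)).$$ *)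

(* Defs.v *)
From HB Require Import structures.
From mathcomp Require Import all_boot all_order all_algebra.
Set Implicit Arguments. Unset Strict Implicit. Unset Printing Implicit Defensive.
Import Order.TTheory GRing.Theory Num.Theory.
Local Open Scope ring_scope.

Section Graphs.
Variable T : finType.
Variable e : rel T.

Definition deg (v : T) : nat := #|[set u | e v u]|.

Definition edges : {set {set T}} := [set [set x; y] | x in T, y in T & e x y].

Definition is_tree : Prop :=
  [/\ 0 < #|T|, symmetric e, irreflexive e,
      (forall x y, connect e x y) &
      (forall s : seq T, uniq s -> 3 <= size s -> ~~ cycle e s)]%N.

Definition is_binary_tree : Prop :=
  is_tree /\ exists r : T, deg r = 2%N /\
    forall v, v != r -> deg v = 1%N \/ deg v = 3%N.
End Graphs.

Definition is_quasi_binary_tree (T : finType) (e : rel T) : Prop :=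
  is_tree e /\
  exists (B : finType) (eB : rel B) (f : T -> B),
    [/\ is_binary_tree eB, injective f & forall x y, e x y -> eB (f x) (f y)].

Section Beta.
Variable R : realFieldType.
Variable T : finType.
Variable e : rel T.
Variable w : T -> R.

Definition wset (A : {set T}) : R := \sum_(v in A) w v.
Definition wT : R := \sum_(v : T) w v.

Definition del_rel (F : {set {set T}}) : rel T :=
  fun x y => e x y && ([set x; y] \notin F).

Definition components (F : {set {set T}}) : {set {set T}} :=
  [set [set y | connect (del_rel F) x y] | x in T].

Definition seqmin (s : seq R) : R := foldr Num.min (head 0 s) s.
Definition seqmax (s : seq R) : R := foldr Num.max (head 0 s) s.

Definition min_comp_weight (F : {set {set T}}) : R :=
  seqmin [seq wset C | C <- enum (components F)].

Definition separators (k : nat) : seq {set {set T}} :=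
  [seq F : {set {set T}} <- enum {set {set T}} | (F \subset edges e) && (#|F| == k.-1)%N].

Definition beta (k : nat) : R := seqmax [seq min_comp_weight F | F <- separators k].

Definition is_omega (i : nat) (x : R) : Prop :=
  (exists v, (i <= deg e v)%N /\ w v = x) /\ (forall v, (i <= deg e v)%N -> w v <= x).
End Beta.

(* Main.v *)
Require Import Defs.
From HB Require Import structures.
From mathcomp Require Import all_boot all_order all_algebra.
From mathcomp Require Import ring lra zify.
Set Implicit Arguments. Unset Strict Implicit. Unset Printing Implicit Defensive.
Import Order.TTheory GRing.Theory Num.Theory.

Section Tree.
Variable T : finType.
Variable e : rel T.
Hypothesis sym : symmetric e.
Hypothesis irr : irreflexive e.
Hypothesis acyc : forall s : seq T, uniq s -> (3 <= size s)%N -> ~~ cycle e s.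

Definition ind (X : {set T}) : rel T := fun x y => [&& e x y, x \in X & y \in X].
Definition side (X : {set T}) v : {set T} := [set y | connect (ind X) v y].
Definition conn (X : {set T}) := forall x y, x \in X -> y \in X -> connect (ind X) x y.
Definition children (X : {set T}) v : {set T} := [set u in X | e v u].

Lemma ind_sym X : symmetric (ind X).
Proof. by move=> x y; rewrite /ind sym; case: (x \in X); case: (y \in X). Qed.

Lemma conn_on (R R' : rel T) x0 y :
  (forall a b, connect R x0 a -> R a b -> R' a b) -> connect R x0 y -> connect R' x0 y.
Proof.
move=> H /connectP[p Rp ->].
suff: forall a, connect R x0 a -> path R a p -> connect R' a (last a p).
  by apply.
elim: p {Rp} => [|b p IH] a Ca //=.
case/andP=> Rab Rp.
apply: (connect_trans (connect1 (H _ _ Ca Rab))).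
apply: IH Rp; exact: connect_trans Ca (connect1 Rab).
Qed.

Lemma path_ind_in X a p : path (ind X) a p -> {subset p <= X}.
Proof.
elim: p a => [|b p IH] a //= /andP[/and3P[_ _ bX] Hp] y.
by rewrite inE => /orP[/eqP-> //|]; apply: (IH b Hp).
Qed.

Lemma no_two_nbrs (Y : {set T}) z x y :
  z \notin Y -> e z x -> e z y -> x != y -> connect (ind Y) x y -> False.
Proof.
move=> zY ezx ezy xy /connectP[p Hp Ey].
case: (shortenP Hp) Ey => p' Hp' Up' _ Ey.
have Hsub := path_ind_in Hp'.
have p'n : p' != [::] by apply: contraNneq xy => E; rewrite Ey E.
have := acyc (s := z :: x :: p').
rewrite cons_uniq Up' andbT.
have -> : z \notin x :: p'.
  rewrite inE negb_or; apply/andP; split.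
    by apply: contraTneq ezx => ->; rewrite irr.
  by apply: contra zY => /Hsub.
have -> : (3 <= (size p').+2)%N by case: p' p'n {Hp' Up' Hsub Ey}.
move/(_ isT isT); rewrite /= ezx rcons_path -Ey sym ezy andbT.
by rewrite (sub_path (e' := e) _ Hp') // => a b /andP[].
Qed.

Lemma conn_mono (X Y : {set T}) x y :
  X \subset Y -> connect (ind X) x y -> connect (ind Y) x y.
Proof.
move=> XY; apply: connect_sub => a b /and3P[eab aX bX]; apply: connect1.
by rewrite /ind eab (subsetP XY _ aX) (subsetP XY _ bX).
Qed.

Lemma side_sub (X : {set T}) v y : v \in X -> y \in side X v -> y \in X.
Proof.
move=> vX; rewrite inE => /connectP[p Hp ->].
case: p Hp => [|b p] //= Hp.
by apply: (path_ind_in (a:=v) (p:=b::p) Hp); exact: mem_last.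
Qed.

Lemma side_restrict (Y : {set T}) p u :
  p \notin side Y u -> side (Y :\ p) u = side Y u.
Proof.
move=> pS; apply/setP=> y; rewrite !inE; apply/idP/idP.
  by apply: conn_mono; apply: subsetDl.
apply: conn_on => a b Ca /and3P[eab aY bY].
have Cb : b \in side Y u by rewrite inE (connect_trans Ca) // connect1 // /ind eab aY bY.
have Ca' : a \in side Y u by rewrite inE.
rewrite /ind eab !in_setD1 aY bY !andbT.
by apply/and3P; split => //; apply/eqP => E; [move: Ca' | move: Cb]; rewrite E; apply/negP.
Qed.

Lemma side_decomp (X : {set T}) v : v \in X ->
  side X v = v |: \bigcup_(u in children X v) side (X :\ v) u.
Proof.
move=> vX; apply/setP=> y; rewrite !inE; apply/idP/idP; last first.
  case/orP=> [/eqP-> //|/bigcupP[u]]; rewrite inE => /andP[uX evu].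
  rewrite inE => Cu; apply: (connect_trans (connect1 (_ : ind X v u))).
    by rewrite /ind evu vX uX.
  by apply: conn_mono Cu; apply: subsetDl.
case/connectP=> p Hp ->.
case: (shortenP Hp) => p' Hp' Up' _.
case: p' Hp' Up' => [|u q] /=; first by rewrite eqxx.
case/andP=> /and3P[evu _ uX] Hq; rewrite inE negb_or => /andP[/andP[vu vq] Uq].
apply/orP; right; apply/bigcupP; exists u; first by rewrite inE uX evu.
rewrite inE; apply/connectP; exists q => //.
apply: (sub_in_path (P := [pred a | a != v]) _ _ Hq).
  move=> a b; rewrite !inE => av bv /and3P[eab aX bX]; by rewrite /ind eab !in_setD1 av bv aX bX.
by rewrite /= eq_sym vu /=; apply/allP => a aq; apply: contraNneq vq => <-.
Qed.

Lemma side_disj (X : {set T}) v u1 u2 : u1 \in children X v -> u2 \in children X v -> u1 != u2 ->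
  [disjoint side (X :\ v) u1 & side (X :\ v) u2].
Proof.
rewrite !inE => /andP[_ e1] /andP[_ e2] u12.
apply/pred0P => y /=; apply/negP => /andP[]; rewrite !inE => C1 C2.
apply: (no_two_nbrs (Y := X :\ v) (z := v) _ e1 e2 u12).
  by rewrite in_setD1 eqxx.
apply: connect_trans C1 _; rewrite (sym_connect_sym (@ind_sym _)); exact: C2.
Qed.

Definition dl (S : {set T}) (F : {set {set T}}) : rel T :=
  fun x y => [&& e x y, x \in S, y \in S & [set x; y] \notin F].
Definition comp (S : {set T}) F x : {set T} := [set y | connect (dl S F) x y].

Lemma dl_sym S F : symmetric (dl S F).
Proof.
move=> x y; rewrite /dl sym setUC.
by case: (x \in S); case: (y \in S); rewrite ?andbF.
Qed.

Lemma closed_conn (R : rel T) (A : {set T}) x y :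
  (forall a b, R a b -> (a \in A) = (b \in A)) -> connect R x y -> (x \in A) = (y \in A).
Proof.
move=> H /connectP[p Hp ->]; elim: p x Hp => [|b p IH] x //= /andP[Rxb Hp].
by rewrite (H _ _ Rxb); apply: IH.
Qed.

Section Cut.
Variables (S : {set T}) (p v : T).
Hypotheses (epv : e p v) (pS : p \in S) (vS : v \in S).
Let A := side (S :\ p) v.
Let B := S :\: A.

Lemma vA : v \in A.
Proof. by rewrite inE connect0. Qed.

Lemma pv_neq : p != v.
Proof. by apply: contraTneq epv => ->; rewrite irr. Qed.

Lemma A_sub a : a \in A -> a \in S :\ p.
Proof. apply: side_sub; by rewrite in_setD1 eq_sym pv_neq vS. Qed.

Lemma pB : p \in B.
Proof. by rewrite in_setD pS andbT; apply/negP => /A_sub; rewrite in_setD1 eqxx. Qed.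

Lemma vB : v \notin B.
Proof. by rewrite in_setD vA. Qed.

Lemma cross a b : a \in A -> b \in S -> e a b -> b \notin A -> a = v /\ b = p.
Proof.
move=> aA bS eab bA.
have aSp := A_sub aA.
have bp : b = p.
  apply/eqP; apply: contraNT bA => bp.
  rewrite inE (connect_trans (_ : connect _ v a)) //; first by move: aA; rewrite inE.
  by apply: connect1; rewrite /ind eab aSp in_setD1 bp bS.
split=> //; apply/eqP; apply: contraT => av.
have : connect (ind (S :\ p)) v a by move: aA; rewrite inE.
move=> C; exfalso; apply: (no_two_nbrs (Y := S :\ p) (z:=p) (x := v) (y := a) _ epv _ _ C).
- by rewrite in_setD1 eqxx.
- by rewrite sym -bp.
- by rewrite eq_sym.
Qed.


Lemma to_p a : a \in B -> connect (ind S) a p -> connect (ind B) a p.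
Proof.
move=> aB /connectP[s Hs Ep].
elim: s a aB Hs Ep => [|b s IH] a aB /=; first by move=> _ ->.
case/andP=> /and3P[eab aS bS] Hs Ep.
have [-> | ap] := eqVneq a p; first exact: connect0.
have bB : b \in B.
  rewrite in_setD bS andbT; apply/negP => bA.
  move: aB; rewrite in_setD => /andP[/negP aA _]; apply: aA.
  have := A_sub bA; rewrite in_setD1 => /andP[bp _].
  move: bA; rewrite !inE => Cb; apply: connect_trans Cb (connect1 _).
  by rewrite /ind sym eab !in_setD1 bp ap aS bS.
apply: connect_trans (IH _ bB Hs Ep); apply: connect1.
by rewrite /ind eab aB bB.
Qed.

Lemma connB : conn S -> conn B.
Proof.
move=> cS x y xB yB.
have xS : x \in S by move: xB; rewrite in_setD => /andP[].
have yS : y \in S by move: yB; rewrite in_setD => /andP[].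
apply: connect_trans (to_p xB (cS _ _ xS pS)) _.
by rewrite (sym_connect_sym (@ind_sym _)); apply: to_p yB (cS _ _ yS pS).
Qed.

Variable F' : {set {set T}}.
Hypothesis FB : forall f, f \in F' -> exists a b, [/\ a \in B, b \in B & f = [set a; b]].
Let F := [set p; v] |: F'.

Lemma notF'_A a b : a \in A -> [set a; b] \notin F'.
Proof.
move=> aA; apply/negP => /FB[x [y [xB yB E]]].
have : a \in [set x; y] by rewrite -E !inE eqxx.
by rewrite !inE => /orP[] /eqP E'; [move: xB|move: yB]; rewrite -E' in_setD aA.
Qed.

Lemma pv_notF' : [set p; v] \notin F'.
Proof. by rewrite setUC; apply: notF'_A vA. Qed.

Lemma crossF a b : dl S F a b -> (a \in A) = (b \in A).
Proof.
case/and4P=> eab aS bS nF.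
case aA: (a \in A); case bA: (b \in A) => //.
  have [av bp] := cross aA bS eab (negbT bA).
  by move: nF; rewrite av bp !inE setUC eqxx.
have [bv ap] := cross bA aS (etrans (esym (sym a b)) eab) (negbT aA).
by move: nF; rewrite bv ap !inE eqxx.
Qed.

Lemma compA x : x \in A -> comp S F x = A.
Proof.
move=> xA; apply/setP=> y; rewrite inE; apply/idP/idP.
  by move/(closed_conn crossF); rewrite xA.
move=> yA.
have key : forall z, z \in A -> connect (dl S F) v z.
  move=> z; rewrite inE; apply: conn_on => a b Ca /and3P[eab aSp bSp].
  have aA : a \in A by rewrite inE.
  have bA : b \in A by rewrite inE (connect_trans Ca) // connect1 // /ind eab aSp bSp.
  move: aSp bSp; rewrite !in_setD1 => /andP[ap aS] /andP[bp bS].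
  rewrite /dl eab aS bS in_setU1 negb_or notF'_A // andbT.
  apply/eqP => E; have : p \in [set a; b] by rewrite E !inE eqxx.
  by rewrite !inE => /orP[]/eqP E'; [move: ap | move: bp]; rewrite E' eqxx.
apply: connect_trans (key _ yA).
by rewrite (sym_connect_sym (@dl_sym _ _)) key.
Qed.

Lemma compB x : x \in B -> comp S F x = comp B F' x.
Proof.
move=> xB; have xS : x \in S by move: xB; rewrite in_setD => /andP[].
have xA : x \notin A by move: xB; rewrite in_setD => /andP[].
apply/setP=> y; rewrite !inE; apply/idP/idP.
  apply: conn_on => a b Ca Dab.
  have aA : (a \in A) = false by rewrite -(closed_conn crossF Ca) (negbTE xA).
  have aS : a \in S.
    rewrite -(closed_conn (A := S) _ Ca) // => c d /and4P[_ -> -> _] //.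
  have bA : (b \in A) = false by rewrite -(crossF Dab).
  move: Dab => /and4P[eab _ bS nF].
  rewrite /dl eab !in_setD aA bA aS bS /=.
  by move: nF; rewrite in_setU1 negb_or => /andP[].
apply: connect_sub => a b /and4P[eab aB bB nF]; apply: connect1.
move: aB bB; rewrite !in_setD => /andP[aA aS] /andP[bA bS].
rewrite /dl eab aS bS in_setU1 negb_or nF !andbT.
apply/eqP => E; have : v \in [set a; b] by rewrite E !inE eqxx orbT.
by rewrite !inE => /orP[]/eqP E'; [move: aA | move: bA]; rewrite -E' vA.
Qed.

End Cut.

Section Weights.
Local Open Scope ring_scope.
Variable R : realFieldType.
Variable w : T -> R.

Lemma wset_decomp (X : {set T}) v : v \in X ->
  wset w (side X v) = w v + \sum_(u in children X v) wset w (side (X :\ v) u).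
Proof.
move=> vX; rewrite /wset side_decomp // big_setU1 /=; last first.
  apply/bigcupP => -[u]; rewrite inE => /andP[uX evu] vs.
  have uv : u != v by apply: contraTneq evu => ->; rewrite irr.
  have := @side_sub (X :\ v) u v; rewrite !in_setD1 eqxx uv uX => /(_ isT vs).
  done.
congr (_ + _).
pose G u := if u \in children X v then side (X :\ v) u else set0.
have -> : \bigcup_(u in children X v) side (X :\ v) u = \bigcup_u G u.
  apply/setP => y; apply/bigcupP/bigcupP => -[u uC yu].
    by exists u => //; rewrite /G uC.
  by exists u; rewrite /G in yu; case: (u \in children X v) yu => //; rewrite inE.
rewrite partition_disjoint_bigcup; last first.
  move=> i j ij; rewrite /G.
  case iC: (i \in children X v); case jC: (j \in children X v);
    try by rewrite disjoints_subset ?sub0set ?setC0 ?subsetT.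
  exact: side_disj.
rewrite [RHS]big_mkcond /=; apply: eq_bigr => u _; rewrite /G.
by case: (u \in children X v) => //; rewrite big_set0.
Qed.

Lemma child_sum (X : {set T}) v (L : R) :
  (forall u, u \in children X v -> wset w (side (X :\ v) u) < L) ->
  \sum_(u in children X v) wset w (side (X :\ v) u) <= #|children X v|%:R * L /\
  ((0 < #|children X v|)%N -> \sum_(u in children X v) wset w (side (X :\ v) u) < #|children X v|%:R * L).
Proof.
move=> H; rewrite mulr_natl -sumr_const; split.
  by apply: ler_sum => u /H /ltW.
move=> /card_gt0P[u0 u0C]; apply: ltr_sum => //.
by apply/hasP; exists u0 => //; rewrite mem_index_enum.
Qed.

Lemma child_eq (S : {set T}) p v u : e p v -> u \in children (S :\ p) v ->
  side ((S :\ p) :\ v) u = side (S :\ v) u.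
Proof.
move=> epv; rewrite inE in_setD1 => /andP[/andP[up uS] evu].
have -> : (S :\ p) :\ v = (S :\ v) :\ p by rewrite setDDl setUC -setDDl.
apply: side_restrict; apply/negP; rewrite inE => C.
apply: (no_two_nbrs (Y := S :\ v) (z := v) (x := u) (y := p) _ evu _ up C).
  by rewrite in_setD1 eqxx.
by rewrite sym.
Qed.

Lemma child_sub (S : {set T}) p v u : e p v -> v \in S -> p \in S -> u \in children (S :\ p) v ->
  side (S :\ v) u \proper side (S :\ p) v.
Proof.
move=> epv vS pS uC; apply/properP; split; last first.
  exists v; first by rewrite inE connect0.
  rewrite inE; apply/negP => /connectP[s Hs Ev].
  case: s Hs Ev => [|b s] /=.
    by move=> _ E; move: uC; rewrite inE -E => /andP[_]; rewrite irr.
  move=> Hs Ev.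
  have := path_ind_in (a := u) (p := b :: s) Hs (mem_last b s).
  by rewrite -Ev in_setD1 eqxx.
apply/subsetP => y; rewrite -(child_eq epv uC) !inE => Cy.
have := uC; rewrite inE => /andP[uSp evu].
apply: (connect_trans (connect1 (_ : ind (S :\ p) v u))).
  by rewrite /ind evu uSp in_setD1 vS andbT /= andbT; apply/eqP => E; move: epv; rewrite E irr.
by apply: conn_mono Cy; apply: subsetDl.
Qed.

Lemma card_children_root (X : {set T}) x : (#|children X x| <= deg e x)%N.
Proof. by apply: subset_leq_card; apply/subsetP => u; rewrite !inE => /andP[]. Qed.

Lemma card_children_edge (S : {set T}) p v : e p v ->
  (#|children (S :\ p) v|.+1 <= deg e v)%N.
Proof.
move=> epv; rewrite /deg [#|[set u | e v u]|](cardsD1 p) inE sym epv add1n ltnS.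
by apply: subset_leq_card; apply/subsetP => u; rewrite !inE => /andP[/andP[-> _] ->].
Qed.

Lemma children0 (X : {set T}) v : v \in X -> #|children X v| = 0%N -> side X v = [set v].
Proof.
move=> vX /cards0_eq C; rewrite side_decomp // C big_set0 setU0 //.
Qed.

Lemma first_step (Rl : rel T) x y : connect Rl x y -> x != y -> exists u, Rl x u.
Proof.
case/connectP=> [[|u s] /= Hs Ey]; first by rewrite Ey eqxx.
by move=> _; exists u; case/andP: Hs.
Qed.

Definition good (S : {set T}) F (L : R) := forall x, x \in S -> L <= wset w (comp S F x).
Definition edgesIn (S : {set T}) (F : {set {set T}}) :=
  forall f, f \in F -> exists a b, [/\ a \in S, b \in S, e a b & f = [set a; b]].

Lemma wset_le_card (X : {set T}) (D : R) : (forall v, w v <= D) -> wset w X <= #|X|%:R * D.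
Proof. by move=> H; rewrite /wset mulr_natl -sumr_const; apply: ler_sum => v _. Qed.

Lemma wset_split (S A : {set T}) : A \subset S -> wset w S = wset w A + wset w (S :\: A).
Proof. by move=> AS; rewrite /wset (big_setID A) (setIidPr AS). Qed.

Lemma side_full (S : {set T}) x : conn S -> x \in S -> side S x = S.
Proof.
move=> cS xS; apply/setP => y; rewrite inE; apply/idP/idP.
  by move=> C; apply: (@side_sub S x y xS); rewrite inE.
by apply: cS.
Qed.

Variables (L g : R).
Hypothesis H1 : forall v, w v <= 2 * L + g.
Hypothesis H2 : forall v, (2 <= deg e v)%N -> w v <= L + g.
Hypothesis H3 : forall v, (3 <= deg e v)%N -> w v <= g.
Hypothesis H4 : forall v, (deg e v <= 3)%N.

Lemma side_weight_edge (S : {set T}) p v : e p v -> p \in S -> v \in S ->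
  (forall u, u \in children (S :\ p) v -> wset w (side (S :\ v) u) < L) ->
  wset w (side (S :\ p) v) <= 2 * L + g /\
  ((0 < #|children (S :\ p) v|)%N -> wset w (side (S :\ p) v) < 2 * L + g + L).
Proof.
move=> epv pS vS H.
have vSp : v \in S :\ p.
  by rewrite in_setD1 vS andbT; apply/eqP => E; move: epv; rewrite E irr.
rewrite wset_decomp //.
have H' : forall u, u \in children (S :\ p) v -> wset w (side ((S :\ p) :\ v) u) < L.
  by move=> u uC; rewrite (child_eq epv uC); apply: H.
have [s1 s2] := child_sum H'.
have dg := card_children_edge S epv.
have h4 := H4 v.
move: s1 s2 dg.
set c := #|children (S :\ p) v|.
set s := \sum_(u in _) _.
case: c => [|[|[|c]]] s1 s2 dg.
- split; last by [].
  by move: s1; rewrite mul0r => s1; have := H1 v; lra.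
- have h2 := H2 dg; have h1 := H1 v.
  have := s2 isT; rewrite mul1r => s2'; split; lra.
- have h3 := H3 dg; have h1 := H1 v.
  have := s2 isT => s2'.
  split; first lra.
  move=> _; case: (leP 0 L) => L0; lra.
- by move: (leq_trans dg h4).
Qed.

Lemma all_ge_L (S : {set T}) j y : 2 * L + g < 0 -> (j < #|S|)%N ->
  j%:R * (2 * L + g) + L <= wset w S -> y \in S -> L <= w y.
Proof.
move=> D0 jS W yS.
have E : wset w S = w y + wset w (S :\: [set y]).
  by rewrite (@wset_split S [set y]) ?sub1set // {1}/wset big_set1.
have := wset_le_card (S :\: [set y]) H1.
have cS : #|S :\: [set y]| = (#|S|).-1.
  by rewrite cardsD (setIidPr _) ?sub1set // cards1 subn1.
rewrite cS => B.
have jn : (j <= (#|S|).-1)%N by move: jS; case: #|S|.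
have : (#|S|.-1)%:R * (2 * L + g) <= j%:R * (2 * L + g).
  by rewrite ler_wnM2r // ?ler_nat // ltW.
lra.
Qed.

Lemma rec j : forall S : {set T}, conn S -> (j < #|S|)%N ->
  j%:R * (2 * L + g) + L <= wset w S ->
  exists F, [/\ edgesIn S F, #|F| = j & good S F L].
Proof.
elim: j => [|j IH] S cS jS W.
  exists set0; split; first by move=> f; rewrite inE.
    by rewrite cards0.
  move=> x xS.
  have -> : comp S set0 x = S.
    apply/setP => y; rewrite inE; apply/idP/idP.
      move=> C; rewrite -(closed_conn (A := S) _ C) // => a b /and4P[_ -> -> _] //.
    move=> yS; apply: connect_sub (cS _ _ xS yS) => a b /and3P[eab aS bS].
    by apply: connect1; rewrite /dl eab aS bS inE.
  by move: W; rewrite mul0r add0r.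
pose cand (q : T * T) := [&& e q.1 q.2, q.1 \in S, q.2 \in S & L <= wset w (side (S :\ q.1) q.2)].
pose sz (q : T * T) := #|side (S :\ q.1) q.2|.
have S2 : (1 < #|S|)%N by apply: leq_ltn_trans jS.
have small : 2 * L + g < 0 -> exists q, cand q && (sz q <= 1)%N.
  move=> D0.
  have allL := all_ge_L D0 jS W.
  suff H : forall n p v, e p v -> p \in S -> v \in S -> (sz (p, v) <= n)%N ->
      exists q, cand q && (sz q <= 1)%N.
    have [x xS] : exists x, x \in S by apply/card_gt0P; apply: ltn_trans S2.
    have [y /andP[yS yx]] : exists y, (y \in S) && (y != x).
      apply/existsP; apply: contraTT S2; rewrite negb_exists => /forallP Hn.
      rewrite -leqNgt (cardsD1 x) xS add1n ltnS leqn0 cards_eq0; apply/eqP.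
      apply/setP => z; rewrite in_setD1 inE; apply/negP => /andP[zx zS].
      by move: (Hn z); rewrite zS zx.
    have xy : x != y by rewrite eq_sym.
    have [u /and3P[exu _ uS]] := first_step (cS _ _ xS yS) xy.
    exact: (H _ x u exu xS uS (leqnn _)).
  elim=> [|n IHn] p v epv pS vS.
    rewrite leqn0 /sz /= cards_eq0 => /eqP E.
    have : v \in side (S :\ p) v by rewrite inE connect0.
    by rewrite E inE.
  move=> szn.
  have vSp : v \in S :\ p.
    by rewrite in_setD1 vS andbT; apply/eqP => E; move: epv; rewrite E irr.
  case: (posnP #|children (S :\ p) v|) => c0.
    exists (p, v); rewrite /cand /sz /= epv pS vS (children0 vSp c0) cards1 andbT /=.
    by rewrite /wset big_set1; apply: allL.
  have [u uC] := card_gt0P c0.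
  have := uC; rewrite inE in_setD1 => /andP[/andP[up uS] evu].
  apply: (IHn v u evu vS uS).
  have := proper_card (child_sub epv vS pS uC); rewrite /sz /= => lt.
  by rewrite -ltnS; apply: leq_trans lt szn.
have [q0 cq0] : exists q, cand q.
  case: (leP 0 (2 * L + g)) => D0; last first.
    by have [q /andP[cq _]] := small D0; exists q.
  have [x xS] : exists x, x \in S by apply/card_gt0P; apply: ltn_trans S2.
  case: (pickP [pred u | (u \in children S x) && (L <= wset w (side (S :\ x) u))]).
    move=> u /andP[uC uL]; exists (x, u).
    by move: uC; rewrite /cand /= inE => /andP[uS exu]; rewrite exu xS uS uL.
  move=> none; exfalso.
  have H : forall u, u \in children S x -> wset w (side (S :\ x) u) < L.
    by move=> u uC; move: (none u); rewrite /= uC /= => /negbT; rewrite -ltNge.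
  have [s1 s2] := child_sum H.
  have := wset_decomp xS; rewrite side_full // => Wd.
  have dg := card_children_root S x; have h4 := H4 x.
  case: (posnP #|children S x|) => c0.
    by move: S2; rewrite -(side_full cS xS) (children0 xS c0) cards1.
  have := s2 c0 => s2'.
  have jD : 0 <= j%:R * (2 * L + g) by apply: mulr_ge0.
  set s := \sum_(u in children S x) wset w (side (S :\ x) u) in Wd s2'.
  move: s2' dg; set c := #|children S x|.
  move: c0 h4; rewrite -/c.
  case: c => [|[|[|[|c]]]] //= _ _ s2' dg.
  - have := H1 x; rewrite mulrSr in W; lra.
  - have := H2 dg; rewrite mulrSr in W; lra.
  - have := H3 dg; rewrite mulrSr in W; lra.
  - by move: (leq_trans dg (H4 x)).
have exP : exists n, [exists q, cand q && (sz q == n)].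
  by exists (sz q0); apply/existsP; exists q0; rewrite cq0 eqxx.
case: (ex_minnP exP) => m /existsP[[p v] /andP[cpv /eqP szm]] mmin.
move: cpv; rewrite /cand /= => /and4P[epv pS vS LA].
set A := side (S :\ p) v in LA szm.
have vSp : v \in S :\ p.
  by rewrite in_setD1 vS andbT; apply/eqP => E; move: epv; rewrite E irr.
have Hch : forall u, u \in children (S :\ p) v -> wset w (side (S :\ v) u) < L.
  move=> u uC; rewrite ltNge; apply/negP => Lu.
  have := uC; rewrite inE in_setD1 => /andP[/andP[up uS] evu].
  have cu : cand (v, u) by rewrite /cand /= evu vS uS Lu.
  have := mmin (sz (v, u)); rewrite -szm.
  have -> : [exists q, cand q && (sz q == sz (v, u))].
    by apply/existsP; exists (v, u); rewrite cu eqxx.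
  move/(_ isT); rewrite leqNgt /sz /=.
  by rewrite (proper_card (child_sub epv vS pS uC)).
have [wA1 wA2] := side_weight_edge epv pS vS Hch.
have AS : A \subset S.
  by apply/subsetP => y /(side_sub vSp); rewrite in_setD1 => /andP[].
set B := S :\: A.
have WS := wset_split AS; rewrite -/B in WS.
have cardS : #|S| = (#|A| + #|B|)%N by rewrite -(cardsID A S) (setIidPr AS).
have cB : conn B by apply: connB.
have jB : (j < #|B|)%N.
  case: (posnP #|children (S :\ p) v|) => c0.
    move: jS; rewrite cardS /A (children0 vSp c0) cards1 add1n.
    by rewrite ltnS.
  rewrite ltnNge; apply/negP => Bj.
  case: (leP 0 (2 * L + g)) => D0.
    have := wset_le_card B H1.
    have : #|B|%:R * (2 * L + g) <= j%:R * (2 * L + g).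
      by rewrite ler_wpM2r // ler_nat.
    have := wA2 c0.
    rewrite mulrSr in W; lra.
  have [[p' v'] /andP[cq szq]] := small D0.
  have := mmin (sz (p', v')).
  have -> : [exists q, cand q && (sz q == sz (p', v'))].
    by apply/existsP; exists (p', v'); rewrite cq eqxx.
  move/(_ isT) => le1.
  have [u uC] := card_gt0P c0.
  have szA : #|A| = m by rewrite -szm.
  have := proper_card (child_sub epv vS pS uC); rewrite -/A szA.
  have : (0 < #|side (S :\ v) u|)%N.
    apply/card_gt0P; exists u; by rewrite inE connect0.
  move=> h1 h2; move: (leq_ltn_trans h1 h2) => h3.
  by move: (leq_trans h3 (leq_trans le1 szq)).
have WB : j%:R * (2 * L + g) + L <= wset w B.
  by rewrite mulrSr in W; lra.
have [F' [eF' cF' gF']] := IH B cB jB WB.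
have FB : forall f, f \in F' -> exists a b, [/\ a \in B, b \in B & f = [set a; b]].
  by move=> f /eF'[a [b [aB bB _ ->]]]; exists a, b.
exists ([set p; v] |: F'); split.
- move=> f; rewrite in_setU1 => /orP[/eqP -> | /eF'[a [b [aB bB eab ->]]]].
    by exists p, v.
  exists a, b; split=> //.
    by move: aB; rewrite in_setD => /andP[].
  by move: bB; rewrite in_setD => /andP[].
- by rewrite cardsU1 (pv_notF' FB) cF'.
- move=> x xS.
  case xA: (x \in A).
    by rewrite (compA epv vS FB xA).
  have xB : x \in B by rewrite in_setD xA xS.
  rewrite (compB epv vS _ xB); exact: gF'.
Qed.


End Weights.
End Tree.

Local Open Scope ring_scope.

Lemma seqmax_ge (R : realFieldType) (s : seq R) x : x \in s -> x <= seqmax s.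
Proof.
rewrite /seqmax; elim: s (head 0 s) => [|y s IH] a //=.
rewrite inE => /orP[/eqP ->|xs]; first by rewrite le_max lexx.
by rewrite le_max (IH a xs) orbT.
Qed.

Lemma seqmin_ge (R : realFieldType) (s : seq R) L :
  s != [::] -> (forall x, x \in s -> L <= x) -> L <= seqmin s.
Proof.
rewrite /seqmin => sn H.
have : L <= head 0 s by case: s sn H => // y s _ H; apply: H; rewrite inE eqxx.
elim: s {sn} H (head 0 s) => [|y s IH] H a //= La.
rewrite le_min; apply/andP; split; first by apply: H; rewrite inE eqxx.
by apply: IH => // x xs; apply: H; rewrite inE xs orbT.
Qed.

Lemma deg_le3 (T : finType) (e : rel T) : is_quasi_binary_tree e -> forall v, (deg e v <= 3)%N.
Proof.
case=> _ [B [eB [f [[_ [r [dr Hr]]] finj fe]]]] v.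
have degB : forall b, (deg eB b <= 3)%N.
  by move=> b; have [-> | /Hr[] ->] := eqVneq b r => //; rewrite dr.
apply: leq_trans (degB (f v)).
rewrite /deg -(card_imset [set u | e v u] finj); apply: subset_leq_card.
by apply/subsetP => y /imsetP[u]; rewrite !inE => evu ->; apply: fe.
Qed.

Theorem theorem2 (R : realFieldType) (T : finType) (e : rel T) (w : T -> R)
    (k : nat) (gamma omega1 omega2 : R) :
  is_quasi_binary_tree e ->
  (2 <= k)%N -> (k <= #|T| - 1)%N ->
  is_omega e w 1 omega1 -> is_omega e w 2 omega2 ->
  (* gamma >= omega_3 (maximum over the possibly empty set of degree-3 vertices) *)
  (forall v, (3 <= deg e v)%N -> w v <= gamma) ->
  wT w >= Num.max ((2 * k%:R - 1) / 2 * omega1 - gamma / 2)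
                  ((2 * k%:R - 1) * omega2 - k%:R * gamma) ->
  beta e w k >= (wT w - (k%:R - 1) * gamma) / (2 * k%:R - 1).
Proof.
move=> qb k2 kT [_ om1] [_ om2] H3 Wmax.
have h4 := deg_le3 qb.
case: qb => [[T0 sym irr cT acyc] _].
rewrite ge_max in Wmax; case/andP: Wmax => Wa Wb.
set K : R := k%:R.
have K2 : 2 <= K by rewrite /K (ler_nat R 2 k).
have Kpos : 0 < 2 * K - 1 by lra.
set L := (wT w - (K - 1) * gamma) / (2 * K - 1).
have eL : L * (2 * K - 1) = wT w - (K - 1) * gamma.
  by rewrite /L mulfVK // gt_eqF.
have T3 : (2 < #|T|)%N by lia.
have deg1 : forall v, (1 <= deg e v)%N.
  move=> v.
  have [y yv] : exists y, y != v.
    apply/existsP; apply: contraTT T3; rewrite negb_exists => /forallP Hn.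
    rewrite -leqNgt (cardD1 v) add1n ltnS; apply: (@leq_trans 0) => //.
    rewrite leqn0; apply/eqP; apply: eq_card0 => z; rewrite !inE.
    by have := Hn z; rewrite negbK andbT => ->.
  have vy : v != y by rewrite eq_sym.
  have [u evu] := first_step (cT v y) vy.
  by apply/card_gt0P; exists u; rewrite inE.
have H1 : forall v, w v <= 2 * L + gamma.
  move=> v; apply: le_trans (om1 v (deg1 v)) _.
  rewrite -subr_ge0 -(pmulr_rge0 _ Kpos).
  have -> : (2 * K - 1) * (2 * L + gamma - omega1) = 2 * wT w + gamma - (2 * K - 1) * omega1.
    have -> : wT w = L * (2 * K - 1) + (K - 1) * gamma by rewrite eL; ring.
    ring.
  have : (2 * K - 1) / 2 * omega1 = (2 * K - 1) * omega1 / 2 by rewrite mulrAC.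
  move: Wa; rewrite -/K => Wa E; rewrite E in Wa.
  lra.
have H2 : forall v, (2 <= deg e v)%N -> w v <= L + gamma.
  move=> v dv; apply: le_trans (om2 v dv) _.
  rewrite -subr_ge0 -(pmulr_rge0 _ Kpos).
  have -> : (2 * K - 1) * (L + gamma - omega2) = wT w + K * gamma - (2 * K - 1) * omega2.
    have -> : wT w = L * (2 * K - 1) + (K - 1) * gamma by rewrite eL; ring.
    ring.
  move: Wb; rewrite -/K => Wb; lra.
have cS : conn e setT.
  move=> x y _ _; rewrite (eq_connect (e' := e)) // => a b.
  by rewrite /ind !inE !andbT.
have kS : (k.-1 < #|[set: T]|)%N by rewrite cardsT; lia.
have WT : wset w [set: T] = wT w by rewrite /wset /wT; apply: eq_bigl => v; rewrite inE.
have W : k.-1%:R * (2 * L + gamma) + L <= wset w [set: T].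
  have Wt : wT w = L * (2 * K - 1) + (K - 1) * gamma by rewrite eL; ring.
  have -> : k.-1%:R = K - 1 by rewrite /K -subn1 natrB // ltnW.
  by rewrite WT Wt; rewrite le_eqVlt; apply/orP; left; apply/eqP; ring.
have [F [eF cF gF]] := rec sym irr acyc H1 H2 H3 h4 cS kS W.
have compE : forall x, [set y | connect (del_rel e F) x y] = comp e [set: T] F x.
  move=> x; apply/setP => y; rewrite !inE; apply: eq_connect => a b.
  by rewrite /dl /del_rel !inE.
apply: (@le_trans _ _ (min_comp_weight e w F)).
  apply: seqmin_ge.
    have [x _] := card_gt0P T0.
    have : [set y | connect (del_rel e F) x y] \in components e F.
      by apply/imsetP; exists x.
    rewrite -mem_enum; case: (enum _) => //.
  move=> c /mapP[C]; rewrite mem_enum => /imsetP[x _ ->] ->.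
  by rewrite compE; apply: gF; rewrite inE.
apply: seqmax_ge; apply: map_f.
rewrite mem_filter mem_enum andbT cF eqxx andbT.
apply/subsetP => f /eF[a [b [_ _ eab ->]]].
by apply/imset2P; exists a b; rewrite ?inE.
Qed.
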